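(* Assume $1\le k\le n-1$ and the setting of the context. Then $\mathbb V=\bigoplus_{\alpha\in\Omega_{\mathbb V}}V_\alpha$, where each $V_\alpha$ is a $k$-submodule of $\mathbb V$ (i.e. $[u,y_2,\dots,y_k,x_{k+1},\dots,x_n]_\sigma\in V_\alpha$ for all $\sigma$, $u\in V_\alpha$, $y_l\in\mathbb V$, $x_l\in\mathbb A$) admitting a multiplicative basis inherited from $\mathfrak B$ (a subset of $\mathfrak B$ which is a basis of $V_\alpha$), and $\mathbb A=\bigoplus_{\beta\in\Omega_{\mathbb A}}A_\beta$, where each $A_\beta$ is an ideal of $\mathbb A$ (i.e. $\langle a_1,\dots,a_n\rangle\in A_\beta$ whenever some $a_l\in A_\beta$ and the others lie in $\mathbb A$) admitting a multiplicative basis inherited from $\mathfrak B'$. Furthermore, setting $\Omega'_{\mathbb V}=\{\alpha\in\Omega_{\mathbb V}:\mathcal P(V_\alpha,\mathbb V,\dots,\mathbb V;\mathbb A,\dots,\mathbb A)\neq0\}$ and $\Omega'_{\mathbb A}=\{\beta\in\Omega_{\mathbb A}:\mathcal P(\mathbb V,\dots,\mathbb V;A_\beta,\mathbb A,\dots,\mathbb A)\neq0\}$, there is a bijection $f:\Omega'_{\mathbb V}\to\Omega'_{\mathbb A}$ such that for every $\alpha\in\Omega'_{\mathbb V}$, $\mathcal P(V_\alpha,\mathbb V,\dots,\mathbb V;A_{f(\alpha)},\mathbb A,\dots,\mathbb A)\neq0$ and $\mathcal P(V_\alpha,\mathbb V,\dots,\mathbb V;A_\beta,\mathbb A,\dots,\mathbb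 A)=0$ for every $\beta\in\Omega_{\mathbb A}$ with $\beta\neq f(\alpha)$.
   Context: Fix integers $n\ge2$, $1\le k\le n$, and an arbitrary field $\mathbb F$; $S_n$ is the symmetric group. An $n$-ary algebra is an $\mathbb F$-vector space $\mathbb A$ with an $n$-linear map $\langle\cdot,\dots,\cdot\rangle:\mathbb A^n\to\mathbb A$; a basis $\mathfrak B'=\{e_j\}_{j\in J}$ of $\mathbb A$ is multiplicative if $\langle e_{j_1},\dots,e_{j_n}\rangle\in\mathbb F e_j$ for some $j\in J$, for all $j_1,\dots,j_n\in J$. Let $\mathbb V$ be a $k$-module over $\mathbb A$: an $\mathbb F$-vector space with, for every $\sigma\in S_n$, an $n$-linear map $\mathbb V^k\times\mathbb A^{n-k}\to\mathbb V$, $(y_1,\dots,y_k,x_{k+1},\dots,x_n)\mapsto[y_1,\dots,y_k,x_{k+1},\dots,x_n]_\sigma$ (the $l$-th argument placed in position $\sigma(l)$), and assume $\mathbb V$ has a basis $\mathfrak B=\{v_i\}_{i\in I}$ which is multiplicative with respect to $\mathfrak B'$, i.e. $[v_{i_1},\dots,v_{i_k},e_{j_{k+1}},\dots,e_{j_n}]_\sigma\in\mathbb F v_r$ for some $r\in I$, for all $\sigma$ and indices. Dimensions are arbitrary. For subspaces $S_1,\dots,S_k\subseteq\mathbb V$ and $T_{k+1},\dots,T_n\subseteq\mathbb A$ let $\mathcal P(S_1,\dots,S_k;T_{k+1},\dots,T_n)$ be the linear span of all $[s_1,\dots,s_k,t_{k+1},\dots,t_n]_\sigma$ with $\sigma\in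 S_n$, $s_l\in S_l$, $t_l\in T_l$. Construction: on $\mathbb A\oplus\mathbb V$ with basis $\mathfrak B''=\mathfrak B\,\dot\cup\,\mathfrak B'$ (index set $K=I\,\dot\cup\,J$) define, for every $\sigma\in S_n$, $n$-linear maps $\llbracket\cdot\rrbracket_\sigma$ by: $\llbracket x_1,\dots,x_n\rrbracket_\sigma$ is $\langle\cdot\rangle$ applied to the arguments $x_l\in\mathbb A$ placed in positions $\sigma(l)$; $\llbracket y_1,\dots,y_k,x_{k+1},\dots,x_n\rrbracket_\sigma=[y_1,\dots,y_k,x_{k+1},\dots,x_n]_\sigma$ for $y_l\in\mathbb V$, $x_l\in\mathbb A$; and $\llbracket y_1,\dots,y_t,x_{t+1},\dots,x_n\rrbracket_\sigma=0$ for $y_l\in\mathbb V$, $x_l\in\mathbb A$, $1\le t\le n$, $t\neq k$. Then $\mathbb A\oplus\mathbb V$ with these maps is an $n$-module over itself (the case ''$k=n$'', no second-type arguments) with multiplicative basis $\mathfrak B''$. Connections on $K$: let $\overline K=\{\overline x:x\in K\}$ be new symbols, $\overline{\overline x}=x$, and write $u_x$ for the element of $\mathfrak B''$ indexed by $x\in K$. For $\sigma\in S_n$ and $x_1,\dots,x_n\in K$ let $a_\sigma(x_1,\dots,x_n)=\emptyset$ if $\llbracket u_{x_1},\dots,u_{x_n}\rrbracket_\sigma=0$ and $=\{r\}$ if it is a nonzero element of $\mathbb F u_r$; let $b_\sigma(x,\overline x_2,\dots,\overline x_n)=\{x'\in K:a_\sigma(x',x_2,\dots,x_n)=\{x\}\}$.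 For $x\in K$ and $Z=(z_2,\dots,z_n)\in(K\,\dot\cup\,\overline K)^{n-1}$ set $\mu(x,Z)=\bigcup_\sigma a_\sigma(x,Z)$ if all $z_l\in K$, $=\bigcup_\sigma b_\sigma(x,Z)$ if all $z_l\in\overline K$, and $\emptyset$ otherwise; $\phi(\mathfrak A,Z)=\bigcup_{x\in\mathfrak A}\mu(x,Z)$ for $\mathfrak A\subseteq K$. Distinct $x,x'\in K$ are connected if there are $Z_1,\dots,Z_t\in(K\,\dot\cup\,\overline K)^{n-1}$, $t\ge1$, such that with $\mathfrak A_0=\{x\}$, $\mathfrak A_m=\phi(\mathfrak A_{m-1},Z_m)$ one has $\mathfrak A_m\neq\emptyset$ for $m<t$ and $x'\in\mathfrak A_t$; each $x$ is connected to itself. This is an equivalence relation on $K$; let $\Omega$ be its set of classes and, for $\alpha\in\Omega$, $U_\alpha=\bigoplus_{x\in\alpha}\mathbb F u_x$, so $\mathbb A\oplus\mathbb V=\bigoplus_{\alpha\in\Omega}U_\alpha$. Put $V_\alpha=U_\alpha\cap\mathbb V$, $A_\alpha=U_\alpha\cap\mathbb A$, $\Omega_{\mathbb V}=\{\alpha\in\Omega:V_\alpha\neq0\}$, $\Omega_{\mathbb A}=\{\alpha\in\Omega:A_\alpha\neq0\}$. *)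

(* Defs.v *)
From HB Require Import structures.
From mathcomp Require Import all_boot all_order all_algebra all_fingroup.
Set Implicit Arguments.
Unset Strict Implicit.
Unset Printing Implicit Defensive.
Import GRing.Theory.
Local Open Scope ring_scope.

Section LinAlg.
Variables (F : fieldType) (M : lmodType F).

Definition span (G : M -> Prop) : M -> Prop :=
  fun z => exists (m : nat) (g : 'I_m -> M) (c : 'I_m -> F),
      (forall t, G (g t)) /\ z = \sum_(t < m) c t *: g t.

Definition nonzero_sp (S : M -> Prop) : Prop := exists z, S z /\ z <> 0.
Definition zero_sp (S : M -> Prop) : Prop := forall z, S z -> z = 0.

Variable X : Type.
Definition lin_indep (b : X -> M) (P : X -> Prop) : Prop :=
  forall (m : nat) (f : 'I_m -> X) (c : 'I_m -> F), injective f ->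
    (forall t, P (f t)) -> \sum_(t < m) c t *: b (f t) = 0 -> forall t, c t = 0.

Definition is_basis_of (S : M -> Prop) (b : X -> M) (P : X -> Prop) : Prop :=
  lin_indep b P /\
  (forall z, S z <-> span (fun y => exists x, P x /\ y = b x) z).

Definition direct_sum (W : M -> Prop) (Fam : (X -> Prop) -> M -> Prop)
    (Idx : (X -> Prop) -> Prop) : Prop :=
  (forall z, W z <-> exists (m : nat) (als : 'I_m -> X -> Prop) (zs : 'I_m -> M),
        (forall t, Idx (als t)) /\ (forall t, Fam (als t) (zs t)) /\
        z = \sum_(t < m) zs t) /\
  (forall (m : nat) (als : 'I_m -> X -> Prop) (zs : 'I_m -> M),
      injective als -> (forall t, Idx (als t)) -> (forall t, Fam (als t) (zs t)) ->
      \sum_(t < m) zs t = 0 -> forall t, zs t = 0).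
End LinAlg.

Definition upd (T : Type) (p : nat) (f : 'I_p -> T) (i : 'I_p) (x : T) : 'I_p -> T :=
  fun j => if j == i then x else f j.

Definition multilinear (F : fieldType) (M N : lmodType F) (p : nat)
    (g : ('I_p -> M) -> N) : Prop :=
  forall (i : 'I_p) (f : 'I_p -> M) (a : F) (x y : M),
    g (upd f i (a *: x + y)) = a *: g (upd f i x) + g (upd f i y).

Definition consT (T : Type) (n : nat) (x : T) (Z : 'I_n.-1 -> T) : 'I_n -> T :=
  fun l => if val l == 0%N then x
           else odflt x (omap Z (insub (val l).-1 : option 'I_n.-1)).

Section Setting.
Variables (F : fieldType) (n k : nat) (A V : lmodType F).
Variable prod : ('I_n -> A) -> A.
Variable act : 'S_n -> ('I_k -> V) -> ('I_(n - k) -> A) -> V.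
Variables (I J : Type) (v : I -> V) (e : J -> A).

(* K = I \dot\cup J ; inl = index of V-basis, inr = index of A-basis *)
Definition Kidx := (I + J)%type.

(* u_x in A (+) V, represented as A * V *)
Definition uK (x : Kidx) : (A * V)%type :=
  match x with inl i => (0, v i) | inr j => (e j, 0) end.

Definition isVb (x : Kidx) : bool := if x is inl _ then true else false.
Definition vof (x : Kidx) : V := match x with inl i => v i | inr _ => 0 end.
Definition aof (x : Kidx) : A := match x with inr j => e j | inl _ => 0 end.

Definition nV (w : 'I_n -> Kidx) : nat := #|[pred l | isVb (w l)]|.

(* tau lists first the positions of the V-arguments, then those of the
   A-arguments, each block in increasing order (stable reordering) *)
Definition stable_perm (w : 'I_n -> Kidx) (tau : 'S_n) : Prop :=
  (forall l : 'I_n, isVb (w (tau l)) = (val l < k)%N) /\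
  (forall l1 l2 : 'I_n, (val l1 < val l2)%N -> ((val l2 < k) || (k <= val l1))%N ->
      (val (tau l1) < val (tau l2))%N).

(* bval sigma w z : z = [[u_{w 1}, ..., u_{w n}]]_sigma in A (+) V *)
Definition bval (sigma : 'S_n) (w : 'I_n -> Kidx) (z : (A * V)%type) : Prop :=
  (nV w = 0%N /\ z = (prod (fun p => aof (w ((sigma^-1)%g p))), 0))
  \/ (nV w = k /\ exists tau rho : 'S_n, stable_perm w tau /\
        (forall l, rho l = sigma (tau l)) /\
        z = (0, act rho
                  (fun l : 'I_k => odflt 0 (omap (fun o => vof (w (tau o)))
                                                 (insub (val l) : option 'I_n)))
                  (fun l : 'I_(n - k) => odflt 0 (omap (fun o => aof (w (tau o)))
                                                 (insub (k + val l)%N : option 'I_n)))))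
  \/ (nV w <> 0%N /\ nV w <> k /\ z = 0).

Definition a_sig (sigma : 'S_n) (w : 'I_n -> Kidx) : Kidx -> Prop :=
  fun r => exists z, bval sigma w z /\ z <> 0 /\ exists c : F, z = c *: uK r.

Definition b_sig (sigma : 'S_n) (x : Kidx) (Z : 'I_n.-1 -> Kidx) : Kidx -> Prop :=
  fun x' => forall r, a_sig sigma (consT x' Z) r <-> r = x.

(* elements of K \dot\cup \bar K : inl y = y, inr y = \bar y *)
Definition mu (x : Kidx) (Z : 'I_n.-1 -> (Kidx + Kidx)%type) : Kidx -> Prop :=
  fun y =>
    (exists Zp : 'I_n.-1 -> Kidx, (forall l, Z l = inl (Zp l)) /\
        exists sigma, a_sig sigma (consT x Zp) y) \/
    (exists Zp : 'I_n.-1 -> Kidx, (forall l, Z l = inr (Zp l)) /\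
        exists sigma, b_sig sigma x Zp y).

Definition phi (X : Kidx -> Prop) (Z : 'I_n.-1 -> (Kidx + Kidx)%type) : Kidx -> Prop :=
  fun y => exists x, X x /\ mu x Z y.

Fixpoint chainA (Zs : nat -> 'I_n.-1 -> (Kidx + Kidx)%type) (x : Kidx) (m : nat)
  : Kidx -> Prop :=
  match m with
  | 0%N => fun y => y = x
  | p.+1 => phi (chainA Zs x p) (Zs p.+1)
  end.

Definition connected (x x' : Kidx) : Prop :=
  x = x' \/
  exists (t : nat) (Zs : nat -> 'I_n.-1 -> (Kidx + Kidx)%type),
    (1 <= t)%N /\ (forall m, (m < t)%N -> exists y, chainA Zs x m y) /\ chainA Zs x t x'.

Definition isClass (al : Kidx -> Prop) : Prop :=
  exists x, forall y, al y <-> connected x y.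

Definition U_al (al : Kidx -> Prop) : (A * V)%type -> Prop :=
  span (fun z => exists x, al x /\ z = uK x).
Definition V_al (al : Kidx -> Prop) : V -> Prop := fun y => U_al al (0, y).
Definition A_al (al : Kidx -> Prop) : A -> Prop := fun a => U_al al (a, 0).

Definition OmegaV (al : Kidx -> Prop) : Prop := isClass al /\ nonzero_sp (V_al al).
Definition OmegaA (al : Kidx -> Prop) : Prop := isClass al /\ nonzero_sp (A_al al).

Definition Pspan (S : 'I_k -> V -> Prop) (T : 'I_(n - k) -> A -> Prop) : V -> Prop :=
  span (fun z => exists (sigma : 'S_n) (y : 'I_k -> V) (x : 'I_(n - k) -> A),
            (forall l, S l (y l)) /\ (forall l, T l (x l)) /\ z = act sigma y x).

Definition firstS (T : Type) (p : nat) (S0 : T -> Prop) : 'I_p -> T -> Prop :=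
  fun l => if val l == 0%N then S0 else (fun _ => True).
Definition allS (T : Type) (p : nat) : 'I_p -> T -> Prop := fun _ _ => True.

Definition OmegaV' (al : Kidx -> Prop) : Prop :=
  OmegaV al /\ nonzero_sp (Pspan (firstS (V_al al)) (@allS A (n - k))).
Definition OmegaA' (be : Kidx -> Prop) : Prop :=
  OmegaA be /\ nonzero_sp (Pspan (@allS V k) (firstS (A_al be))).

Definition withFirst (T : Type) (p : nat) (u : T) (ys : 'I_p -> T) : 'I_p -> T :=
  fun l => if val l == 0%N then u else ys l.
End Setting.

(* Main.v *)
Require Import Defs.
From HB Require Import structures.
From mathcomp Require Import all_boot all_order all_algebra all_fingroup.
From mathcomp Require Import zify.
From Stdlib Require Import ClassicalEpsilon FunctionalExtensionality PropExtensionality Relations.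
Import GRing.Theory.
Import Defs.
Local Open Scope ring_scope.
Set Implicit Arguments.
Unset Strict Implicit.
Unset Printing Implicit Defensive.

Lemma fchoice (T : Type) (m : nat) (P : 'I_m -> T -> Prop) :
  (forall t, exists x, P t x) -> exists f : 'I_m -> T, forall t, P t (f t).
Proof.
move=> H.
exists (fun t => proj1_sig (constructive_indefinite_description _ (H t))).
move=> t; exact: (proj2_sig (constructive_indefinite_description _ (H t))).
Qed.

Definition deq (X : Type) (x y : X) : bool :=
  if excluded_middle_informative (x = y) then true else false.
Lemma deqP (X : Type) (x y : X) : reflect (x = y) (deq x y).
Proof. rewrite /deq; case: excluded_middle_informative => h; constructor => //. Qed.

Section Lin.
Variables (F : fieldType) (M : lmodType F).
Implicit Types G : M -> Prop.

Lemma span0 G : span G 0.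
Proof.
exists 0%N, (fun _ => 0), (fun _ => 0); split; first by case.
by rewrite big_ord0.
Qed.

Lemma span_gen G x : G x -> span G x.
Proof.
move=> Gx; exists 1%N, (fun _ => x), (fun _ => 1); split => //.
by rewrite big_ord1 scale1r.
Qed.

Lemma span_scale G a z : span G z -> span G (a *: z).
Proof.
move=> [m [g [c [Hg ->]]]]; exists m, g, (fun t => a * c t); split => //.
by rewrite scaler_sumr; apply: eq_bigr => t _; rewrite scalerA.
Qed.

Lemma split_l (m1 m2 : nat) (a : 'I_m1) : split (lshift m2 a) = inl a.
Proof. exact: (unsplitK (inl a)). Qed.
Lemma split_r (m1 m2 : nat) (a : 'I_m2) : split (rshift m1 a) = inr a.
Proof. exact: (unsplitK (inr a)). Qed.

Definition catf (T : Type) (m1 m2 : nat) (f1 : 'I_m1 -> T) (f2 : 'I_m2 -> T) : 'I_(m1 + m2) -> T :=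
  fun t => match split t with inl a => f1 a | inr b => f2 b end.

Lemma catf_l T m1 m2 (f1 : 'I_m1 -> T) (f2 : 'I_m2 -> T) a : catf f1 f2 (lshift m2 a) = f1 a.
Proof. by rewrite /catf split_l. Qed.
Lemma catf_r T m1 m2 (f1 : 'I_m1 -> T) (f2 : 'I_m2 -> T) a : catf f1 f2 (rshift m1 a) = f2 a.
Proof. by rewrite /catf split_r. Qed.

Lemma catf_all T m1 m2 (f1 : 'I_m1 -> T) (f2 : 'I_m2 -> T) (P : T -> Prop) :
  (forall t, P (f1 t)) -> (forall t, P (f2 t)) -> forall t, P (catf f1 f2 t).
Proof. by move=> H1 H2 t; rewrite /catf; case: split. Qed.

Lemma span_add G z1 z2 : span G z1 -> span G z2 -> span G (z1 + z2).
Proof.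
move=> [m1 [g1 [c1 [H1 ->]]]] [m2 [g2 [c2 [H2 ->]]]].
exists (m1 + m2)%N, (catf g1 g2), (catf c1 c2); split; first exact: catf_all.
rewrite big_split_ord /=; congr (_ + _); apply: eq_bigr => t _;
  by rewrite ?catf_l ?catf_r.
Qed.

Lemma span_sum G (m : nat) (P : pred 'I_m) (z : 'I_m -> M) :
  (forall t, P t -> span G (z t)) -> span G (\sum_(t < m | P t) z t).
Proof.
move=> H; apply: (big_ind (span G)) => //; [exact: span0 | exact: span_add].
Qed.

Lemma span_sub G1 G2 z : (forall y, G1 y -> span G2 y) -> span G1 z -> span G2 z.
Proof.
move=> H [m [g [c [Hg ->]]]]; apply: span_sum => t _; apply: span_scale; exact: H.
Qed.

Lemma span_lin (N : lmodType F) (h : M -> N) G z :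
  (forall x y, h (x + y) = h x + h y) -> (forall a x, h (a *: x) = a *: h x) ->
  span G z -> span (fun y => exists x, G x /\ y = h x) (h z).
Proof.
move=> hadd hsc [m [g [c [Hg ->]]]].
have h0 : h 0 = 0 by rewrite -(scale0r 0) hsc scale0r.
exists m, (fun t => h (g t)), c; split; first by move=> t; exists (g t).
rewrite (big_morph h hadd h0); apply: eq_bigr => t _; exact: hsc.
Qed.

Variable X : Type.
Variable b : X -> M.

Definition grp (m : nat) (f : 'I_m -> X) (c : 'I_m -> F) (x : X) : F :=
  \sum_(s < m) (if deq (f s) x then c s else 0).

Lemma nf (m : nat) (f : 'I_m -> X) (c : 'I_m -> F) :
  exists m' (g : 'I_m' -> X) (d : 'I_m' -> F), injective g /\ (forall t, exists s, g t = f s) /\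
   \sum_(s < m) c s *: b (f s) = \sum_(t < m') d t *: b (g t) /\
   forall x, grp f c x = grp g d x.
Proof.
elim: m f c => [|m IH] f c.
  exists 0%N, f, c; split; first by case.
  by split => // t; exists t.
have [m' [g [d [gi [gim [gs gg]]]]]] := IH (fun t => f (lift ord0 t)) (fun t => c (lift ord0 t)).
case: (classic (exists t, g t = f ord0)) => [[t0 Ht0]|Hno].
  exists m', g, (fun t => d t + (if t == t0 then c ord0 else 0)); split => //.
  split; first by move=> t; have [s ->] := gim t; exists (lift ord0 s).
  split.
    rewrite big_ord_recl gs.
    under [RHS]eq_bigr => t _ do rewrite scalerDl.
    rewrite big_split /= addrC; congr (_ + _).
    rewrite (bigD1 t0) //= eqxx Ht0 big1 ?addr0 // => t /negbTE ->; by rewrite scale0r.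
  move=> x; have gx := gg x; rewrite /grp in gx *; rewrite big_ord_recl gx.
  have -> : \sum_(i < m') (if deq (g i) x then d i + (if i == t0 then c ord0 else 0) else 0) =
           \sum_(i < m') (if deq (g i) x then d i else 0) +
           \sum_(i < m') (if deq (g i) x then (if i == t0 then c ord0 else 0) else 0).
    rewrite -big_split; apply: eq_bigr => i _.
    by case: (deq _ _) => /=; rewrite ?addr0.
  rewrite addrC; congr (_ + _).
  rewrite (bigD1 t0) //= eqxx Ht0 big1 ?addr0 // => t /negbTE ->; by case: deq.
exists m'.+1, (fun t => match unlift ord0 t with Some t' => g t' | None => f ord0 end),
  (fun t => match unlift ord0 t with Some t' => d t' | None => c ord0 end).
split.
  move=> t1 t2; case: unliftP => [j1 ->|->]; case: unliftP => [j2 ->|->] //.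
  - by move/gi => ->.
  - by move=> H; case: Hno; exists j1.
  - by move=> H; case: Hno; exists j2.
split.
  move=> t; case: unliftP => [j _|_]; last by exists ord0.
  by have [s ->] := gim j; exists (lift ord0 s).
split.
  by rewrite !big_ord_recl unlift_none gs; congr (_ + _); apply: eq_bigr => t _; rewrite liftK.
move=> x; rewrite /grp !big_ord_recl unlift_none -/(grp _ _ x) gg /grp; congr (_ + _).
by apply: eq_bigr => t _; rewrite liftK.
Qed.

Lemma grp_inj (m : nat) (g : 'I_m -> X) (d : 'I_m -> F) t :
  injective g -> grp g d (g t) = d t.
Proof.
move=> gi; rewrite /grp (bigD1 t) //=.
have -> : deq (g t) (g t) by apply/deqP.
rewrite big1 ?addr0 // => s /eqP hs.
case: deqP => // /gi hs'; by case: hs.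
Qed.

Lemma I1 (P : X -> Prop) (m : nat) (f : 'I_m -> X) (c : 'I_m -> F) :
  lin_indep b P -> (forall s, P (f s)) -> \sum_(s < m) c s *: b (f s) = 0 ->
  forall x, grp f c x = 0.
Proof.
move=> hind hP h0 x.
have [m' [g [d [gi [gim [gs gg]]]]]] := nf f c.
have dz : forall t, d t = 0.
  apply: (hind m' g d gi) => [t|]; last by rewrite -gs.
  by have [s ->] := gim t.
by rewrite gg /grp big1 // => t _; rewrite dz; case: deq.
Qed.

Lemma I2 (m : nat) (f : 'I_m -> X) (c : 'I_m -> F) :
  (forall x, grp f c x = 0) -> \sum_(s < m) c s *: b (f s) = 0.
Proof.
move=> H.
have [m' [g [d [gi [gim [gs gg]]]]]] := nf f c.
rewrite gs big1 // => t _.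
by rewrite -(grp_inj d t gi) -gg H scale0r.
Qed.

Lemma span_rep (Q : X -> Prop) z :
  span (fun y => exists x, Q x /\ y = b x) z ->
  exists m (f : 'I_m -> X) (c : 'I_m -> F), (forall t, Q (f t)) /\ z = \sum_(t < m) c t *: b (f t).
Proof.
move=> [m [g [c [Hg ->]]]].
have [f Hf] := fchoice Hg.
exists m, f, c; split; first by move=> t; case: (Hf t).
by apply: eq_bigr => t _; case: (Hf t) => _ ->.
Qed.

Lemma span_disj (Q : X -> Prop) z :
  lin_indep b (fun _ => True) ->
  span (fun y => exists x, Q x /\ y = b x) z ->
  span (fun y => exists x, ~ Q x /\ y = b x) z -> z = 0.
Proof.
move=> hind /span_rep [m1 [f1 [c1 [H1 E1]]]] /span_rep [m2 [f2 [c2 [H2 E2]]]].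
have hs : \sum_(t < m1 + m2) catf c1 (fun t => - c2 t) t *: b (catf f1 f2 t) = 0.
  rewrite big_split_ord /=.
  under eq_bigr => t _ do rewrite catf_l catf_l.
  under [X in _ + X]eq_bigr => t _ do rewrite catf_r catf_r scaleNr.
  by rewrite sumrN -E1 -E2 subrr.
have hg := I1 (P := fun _ => True) hind (fun _ => I) hs.
rewrite E1; apply: I2 => x.
case: (classic (Q x)) => Qx.
  move: (hg x); rewrite /grp big_split_ord /=.
  rewrite [X in _ + X]big1 ?addr0.
    by under eq_bigr => t _ do rewrite catf_l catf_l.
  move=> t _; rewrite catf_r; case: deqP => // hx.
  by case: (H2 t); rewrite hx.
rewrite /grp big1 // => t _; case: deqP => // hx.
by case: Qx; rewrite -hx.
Qed.

Variable Y : Type.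
Variable emb : X -> Y.
Definition Famb (al : Y -> Prop) : M -> Prop :=
  span (fun y => exists x, al (emb x) /\ y = b x).

Lemma ds_gen (Idx : (Y -> Prop) -> Prop) :
  lin_indep b (fun _ => True) ->
  (forall z, span (fun y => exists x, True /\ y = b x) z) ->
  (forall x, exists al, Idx al /\ al (emb x)) ->
  (forall al1 al2 x, Idx al1 -> Idx al2 -> al1 (emb x) -> al2 (emb x) -> al1 = al2) ->
  direct_sum (fun _ => True) Famb Idx.
Proof.
move=> hind hspan hcov hdisj; split.
  move=> z; split => // _.
  have [m [f [c [_ E]]]] := span_rep (hspan z).
  have [als Hals] := fchoice (fun t => hcov (f t)).
  exists m, als, (fun t => c t *: b (f t)); split; first by move=> t; case: (Hals t).
  split => // t; apply: span_scale; apply: span_gen; exists (f t); split => //.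
  by case: (Hals t).
move=> m als zs ai hI hF hsum t0.
apply: (@span_disj (fun x => als t0 (emb x))) => //; first exact: hF.
have -> : zs t0 = - \sum_(t < m | t != t0) zs t.
  by move: hsum; rewrite (bigD1 t0) //= => /eqP; rewrite addr_eq0 => /eqP.
rewrite -scaleN1r; apply: span_scale; apply: span_sum => t tt0.
apply: span_sub (hF t) => y [x [ax ->]]; apply: span_gen; exists x; split => // a0.
have := hdisj _ _ _ (hI t) (hI t0) ax a0; move/ai => e.
by move: tt0; rewrite e eqxx.
Qed.
End Lin.


Section ML.
Variables (F : fieldType) (M N : lmodType F) (p : nat) (g : ('I_p -> M) -> N).
Hypothesis gml : multilinear g.

Lemma upd_same (f : 'I_p -> M) i : upd f i (f i) = f.
Proof. by apply: functional_extensionality => j; rewrite /upd; case: eqP => // ->. Qed.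

Lemma ml_zero f i : g (upd f i 0) = 0.
Proof.
have H := gml i f 1 0 0; rewrite !scale1r addr0 in H.
by apply: (addrI (g (upd f i 0))); rewrite addr0 -H.
Qed.

Lemma ml_sum f i m (c : 'I_m -> F) (x : 'I_m -> M) :
  g (upd f i (\sum_(t < m) c t *: x t)) = \sum_(t < m) c t *: g (upd f i (x t)).
Proof.
elim: m c x => [|m IH] c x; first by rewrite !big_ord0 ml_zero.
by rewrite !big_ord_recl gml IH.
Qed.

Lemma ml_expand (G : 'I_p -> M -> Prop) (S : N -> Prop) :
  S 0 -> (forall a b, S a -> S b -> S (a + b)) -> (forall c a, S a -> S (c *: a)) ->
  (forall f, (forall l, G l (f l)) -> S (g f)) ->
  forall f, (forall l, span (G l) (f l)) -> S (g f).
Proof.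
move=> S0 Sadd Ssc base.
have key : forall q f, (forall l : 'I_p, (val l < q)%N -> span (G l) (f l)) ->
    (forall l : 'I_p, (q <= val l)%N -> G l (f l)) -> S (g f).
  elim=> [|q IH] f H1 H2; first by apply: base => l; apply: H2.
  case: (ltnP q p) => [qp|pq]; last first.
    apply: IH => l hl; first by apply: H1; apply: ltnW.
    by move: (ltn_ord l); rewrite ltnNge (leq_trans pq hl).
  set i := Ordinal qp.
  have [m [x [c [Hx Ef]]]] := H1 i (ltnSn q).
  rewrite -(upd_same f i) Ef ml_sum.
  apply: (big_ind S) => // t _; apply: Ssc; apply: IH => l hl; rewrite /upd.
    have -> : (l == i) = false by apply/negbTE; apply/eqP => e; move: hl; rewrite e ltnn.
    by apply: H1; apply: ltnW.
  case: eqP => [->//|ne]; apply: H2.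
  rewrite ltn_neqAle hl andbT; apply/eqP => e; apply: ne; exact: val_inj.
move=> f H; apply: (key p) => // l hl.
by move: (ltn_ord l); rewrite ltnNge hl.
Qed.
End ML.


Lemma incr_gap (n : nat) (h : 'I_n -> 'I_n) :
  (forall l1 l2 : 'I_n, (val l1 < val l2)%N -> (val (h l1) < val (h l2))%N) ->
  forall d (l1 l2 : 'I_n), val l2 = (val l1 + d)%N -> (val (h l1) + d <= val (h l2))%N.
Proof.
move=> hi; elim=> [|d IH] l1 l2 E.
  by rewrite addn0 in E; rewrite addn0 (_ : l2 = l1) //; apply: val_inj.
have lt : (val l1 + d < n)%N by rewrite (leq_trans _ (ltn_ord l2)) // E addnS.
have := IH l1 (Ordinal lt) erefl.
have := hi (Ordinal lt) l2; rewrite /= E addnS ltnSn => /(_ isT).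
rewrite addnS => a b; exact: leq_ltn_trans b a.
Qed.

Lemma incr_id (n : nat) (h : 'I_n -> 'I_n) :
  (forall l1 l2 : 'I_n, (val l1 < val l2)%N -> (val (h l1) < val (h l2))%N) ->
  forall l, h l = l.
Proof.
move=> hi l; apply: val_inj.
have ltl := ltn_ord l.
have hN : (n.-1 < n)%N by lia.
have H := @incr_gap _ h hi (n.-1 - val l)%N l (Ordinal hN) ltac:(rewrite /=; lia).
have := ltn_ord (h (Ordinal hN)).
have l0 : (0 < n)%N by lia.
have H2 := @incr_gap _ h hi (val l) (Ordinal l0) l ltac:(rewrite /=; lia).
move: H H2 => /=; lia.
Qed.

Lemma stable_uniq (n k : nat) (I J : Type) (w : 'I_n -> Kidx I J) (t1 t2 : 'S_n) :
  stable_perm k w t1 -> stable_perm k w t2 -> t1 = t2.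
Proof.
move=> [v1 o1] [v2 o2].
pose h := (t1 * t2^-1)%g.
have th : forall x, t2 (h x) = t1 x by move=> x; rewrite /h permM permKV.
have bl : forall x, (val (h x) < k)%N = (val x < k)%N by move=> x; rewrite -v2 th v1.
have hinj : injective h := @perm_inj _ h.
have same : forall l1 l2 : 'I_n, (val l1 < val l2)%N -> ((val l2 < k) || (k <= val l1))%N ->
    (val (h l1) < val (h l2))%N.
  move=> l1 l2 lt hb.
  rewrite ltnNge; apply/negP; rewrite leq_eqVlt => /orP [/eqP eq|lt'].
    have := hinj _ _ (val_inj eq) => e12; by move: lt; rewrite e12 ltnn.
  have hb' : ((val (h l1) < k) || (k <= val (h l2)))%N.
    case/orP: hb => hb; apply/orP.
    left; rewrite (bl l1); exact: ltn_trans lt hb. right.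
    have := bl l2; rewrite (_ : (val l2 < k)%N = false); last lia.
    by move=> b2; rewrite leqNgt b2.
  have := o2 _ _ lt' hb'; rewrite !th.
  have := o1 _ _ lt hb; lia.
have inc : forall l1 l2 : 'I_n, (val l1 < val l2)%N -> (val (h l1) < val (h l2))%N.
  move=> l1 l2 lt.
  case: (ltnP (val l2) k) => l2k; first by apply: same => //; rewrite l2k.
  case: (ltnP (val l1) k) => l1k; last by apply: same => //; rewrite l1k orbT.
  have a : (val (h l1) < k)%N by rewrite (bl l1).
  have b : ~~ (val (h l2) < k)%N by rewrite (bl l2) -leqNgt.
  rewrite -leqNgt in b; exact: leq_trans a b.
apply/permP => x; by rewrite -th (incr_id inc).
Qed.


Section Basis.
Variables (F : fieldType) (M : lmodType F) (X : Type) (b : X -> M).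
Hypothesis hind : lin_indep b (fun _ => True).

Lemma bscale0 c x : c *: b x = 0 -> c = 0.
Proof.
move=> H.
have := hind (m:=1) (f := fun _ => x) (c := fun _ => c).
move=> /(_ _ _ _ ord0); apply => //.
  by move=> a a' _; rewrite (ord1 a) (ord1 a').
by rewrite big_ord1.
Qed.

Lemma bnz x : b x <> 0.
Proof. by move=> H; have := @bscale0 1 x; rewrite scale1r => /(_ H) /eqP; rewrite oner_eq0. Qed.

Lemma bscale_eq c1 c2 x1 x2 : c1 *: b x1 = c2 *: b x2 -> c1 <> 0 -> x1 = x2.
Proof.
move=> H c10; apply: NNPP => ne.
pose f := fun t : 'I_2 => if val t == 0%N then x1 else x2.
pose c := fun t : 'I_2 => if val t == 0%N then c1 else - c2.
have finj : injective f.
  move=> [[|[|?]] ?] [[|[|?]] ?] //=; rewrite /f /= => h; try (by apply: val_inj);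
  by case: ne; rewrite h.
have := @hind 2 f c finj (fun _ => I).
move=> h; apply: c10; apply: (h _ ord0).
by rewrite big_ord_recl big_ord1 /c /f /= H scaleNr subrr.
Qed.
End Basis.

Lemma consT_nat (T : Type) (n : nat) (x : T) (Z : nat -> T) (l : 'I_n) :
  consT x (fun q : 'I_n.-1 => Z (val q)) l = if val l == 0%N then x else Z (val l).-1.
Proof.
rewrite /consT; case: eqP => // h.
have lo : (val l < n)%N := ltn_ord l.
have lt : ((val l).-1 < n.-1)%N by lia.
by rewrite insubT.
Qed.

Lemma nV_stable (n k : nat) (I J : Type) (w : 'I_n -> Kidx I J) tau :
  (k <= n)%N -> stable_perm k w tau -> nV w = k.
Proof.
move=> kn [vt _]; rewrite /nV.
rewrite -sum1_card.
rewrite (reindex_inj (@perm_inj _ tau)) /=.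
under eq_bigl => l do rewrite unfold_in /= vt.
rewrite (big_ord_narrow (F := fun _ => 1%N) kn).
by rewrite sum1_card card_ord.
Qed.

Lemma nV0 (n : nat) (I J : Type) (w : 'I_n -> Kidx I J) :
  (forall l, isVb (w l) = false) -> nV w = 0%N.
Proof.
move=> h; rewrite /nV; apply: eq_card0 => l; by rewrite unfold_in /= h.
Qed.

Section Setting.
Variables (F : fieldType) (n k : nat).
Hypotheses (hn : (2 <= n)%N) (hk1 : (1 <= k)%N) (hkn : (k <= n - 1)%N).
Variables (A V : lmodType F) (prod : ('I_n -> A) -> A)
  (act : 'S_n -> ('I_k -> V) -> ('I_(n - k) -> A) -> V)
  (I J : Type) (v : I -> V) (e : J -> A).
Hypotheses (vind : lin_indep v (fun _ => True)) (eind : lin_indep e (fun _ => True)).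

Local Notation K := (Kidx I J).
Local Notation uK := (uK v e).
Local Notation bval := (bval prod act v e).
Local Notation a_sig := (a_sig prod act v e).
Local Notation mu := (mu prod act v e).
Local Notation Conn := (connected prod act v e).

Lemma uK_uniq (z : A * V) c1 c2 r1 r2 :
  z <> 0 -> z = c1 *: uK r1 -> z = c2 *: uK r2 -> r1 = r2.
Proof.
move=> nz E1 E2.
have c1n : c1 <> 0 by move=> c0; apply: nz; rewrite E1 c0 scale0r.
have c2n : c2 <> 0 by move=> c0; apply: nz; rewrite E2 c0 scale0r.
move: E2; rewrite {}E1 => {nz}.
case: r1 => [i1|j1]; case: r2 => [i2|j2] /= [h1 h2].
- by rewrite (bscale_eq vind h2 c1n).
- rewrite scaler0 in h2; exfalso; exact: (c1n (bscale0 vind h2)).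
- rewrite scaler0 in h1; exfalso; exact: (c1n (bscale0 eind h1)).
- by rewrite (bscale_eq eind h1 c1n).
Qed.

Lemma bval_fun sigma w z1 z2 : bval sigma w z1 -> bval sigma w z2 -> z1 = z2.
Proof.
have k0 : k <> 0%N by lia.
case=> [[n1 ->]|[[n1 [t1 [r1 [s1 [hr1 ->]]]]]|[n1 [n1' ->]]]];
case=> [[n2 ->]|[[n2 [t2 [r2 [s2 [hr2 ->]]]]]|[n2 [n2' ->]]]] //;
  try (by rewrite n1 in n2; case: k0); try (by rewrite n2 in n1; case: k0);
  try (by case: n2'); try (by case: n1').
have et := stable_uniq s1 s2; subst t2.
have -> : r1 = r2 by apply/permP => l; rewrite hr1 hr2.
by [].
Qed.

Lemma a_sig_fun sigma w r1 r2 : a_sig sigma w r1 -> a_sig sigma w r2 -> r1 = r2.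
Proof.
move=> [z1 [b1 [nz1 [c1 E1]]]] [z2 [b2 [nz2 [c2 E2]]]].
have ez := bval_fun b1 b2; clear b1 b2.
rewrite -ez in E2; exact: uK_uniq nz1 E1 E2.
Qed.

Definition step (x y : K) := exists Z, mu x Z y.
Local Notation rt := (clos_refl_trans K step).
Local Notation chain := (chainA prod act v e).

Lemma step_sym x y : step x y -> step y x.
Proof.
move=> [Z [[Zp [hZ [s hs]]]|[Zp [hZ [s hs]]]]].
- exists (fun l => inr (Zp l)); right; exists Zp; split => //; exists s.
  move=> r; split => [h|->]; [exact: a_sig_fun h hs | exact hs].
- exists (fun l => inl (Zp l)); left; exists Zp; split => //; exists s.
  exact: (proj2 (hs x) erefl).
Qed.

Lemma chain_ext Zs Zs' x m : (forall i, (0 < i <= m)%N -> Zs i = Zs' i) ->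
  forall y, chain Zs x m y <-> chain Zs' x m y.
Proof.
elim: m => [|m IH] H y /=; first done.
rewrite /phi H; last by rewrite /=.
have IH' := IH (fun i hi => H i ltac:(move: hi; case/andP => a b; rewrite a /=; exact: leqW b)).
split => [[w [hw hm]]|[w [hw hm]]]; exists w; split => //; by apply/IH'.
Qed.

Lemma chain_rt Zs x m y : chain Zs x m y -> rt x y.
Proof.
elim: m y => [|m IH] y /=; first by move=> ->; apply: rt_refl.
move=> [w [hw hm]]; apply: rt_trans (IH _ hw) (rt_step _ _ _ _ _).
by exists (Zs m.+1).
Qed.

Lemma conn_rt x y : Conn x y -> rt x y.
Proof.
case=> [->|[t [Zs [_ [_ h]]]]]; first exact: rt_refl.
exact: chain_rt h.
Qed.

Lemma conn_step1 x y z : Conn x y -> step y z -> Conn x z.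
Proof.
move=> hc [Z hZ]; right.
case: hc => [exy|[t [Zs [ht [hne hch]]]]].
  subst y.
  exists 1%N, (fun _ => Z); split => //; split.
    by move=> m; rewrite ltnS leqn0 => /eqP ->; exists x.
  by exists x.
pose Zs' := fun i => if i == t.+1 then Z else Zs i.
have ext : forall m, (m <= t)%N -> forall w, chain Zs x m w <-> chain Zs' x m w.
  move=> m mt; apply: chain_ext => i /andP [_ hi]; rewrite /Zs'.
  by rewrite (_ : (i == t.+1) = false) //; apply/negbTE; rewrite neq_ltn (leq_ltn_trans hi).
exists t.+1, Zs'; split => //; split.
  move=> m; rewrite ltnS leq_eqVlt => /orP [/eqP ->|mt].
    by exists y; apply/ext.
  have [w hw] := hne m mt; exists w; apply/ext => //; exact: ltnW.
by exists y; split; [apply/ext | rewrite /Zs' eqxx].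
Qed.

Lemma rt_conn x y : rt x y -> Conn x y.
Proof.
move=> h; apply clos_rt_rtn1 in h; induction h as [|y0 z0 hs _ IH]; first by left.
exact: conn_step1 IH hs.
Qed.

Lemma rt_sym x y : rt x y -> rt y x.
Proof.
elim=> [a b h|a|a b c _ h1 _ h2].
- by apply: rt_step; apply: step_sym.
- exact: rt_refl.
- exact: rt_trans h2 h1.
Qed.

Lemma conn_sym x y : Conn x y -> Conn y x.
Proof. by move/conn_rt/rt_sym/rt_conn. Qed.

Lemma conn_trans x y z : Conn x y -> Conn y z -> Conn x z.
Proof. by move=> /conn_rt h1 /conn_rt h2; apply: rt_conn; apply: rt_trans h1 h2. Qed.

Lemma step_conn x y : step x y -> Conn x y.
Proof. by move=> h; apply: rt_conn; apply: rt_step. Qed.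

Local Notation isCl := (isClass prod act v e).

Lemma cls_conn al x y : isCl al -> al x -> Conn x y -> al y.
Proof.
move=> [x0 h] ax cxy; apply/h; apply: conn_trans cxy; exact/h.
Qed.

Lemma cls_eq al1 al2 x : isCl al1 -> isCl al2 -> al1 x -> al2 x -> al1 = al2.
Proof.
move=> [x1 h1] [x2 h2] a1 a2.
apply: functional_extensionality => y; apply: propositional_extensionality.
rewrite h1 h2.
have c12 : Conn x1 x2 by apply: conn_trans (proj1 (h1 x) a1) (conn_sym (proj1 (h2 x) a2)).
split => h; [exact: conn_trans (conn_sym c12) h | exact: conn_trans c12 h].
Qed.

Lemma cls_of x : isCl (Conn x) /\ Conn x x.
Proof. by split; [exists x | left]. Qed.

Lemma scale_pair (c : F) (a : A) (b : V) : c *: ((a, b) : A * V) = (c *: a, c *: b).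
Proof. by []. Qed.

Lemma hnk : (0 < n - k)%N.
Proof. lia. Qed.
Definition i0k : 'I_k := Ordinal hk1.
Definition j0 : 'I_(n - k) := Ordinal hnk.
Definition ik (m : nat) : 'I_k := insubd i0k m.
Definition jk (m : nat) : 'I_(n - k) := insubd j0 m.
Lemma ikE (l : 'I_k) : ik (val l) = l.
Proof. by apply: val_inj; rewrite val_insubd ltn_ord. Qed.
Lemma jkE (l : 'I_(n - k)) : jk (val l) = l.
Proof. by apply: val_inj; rewrite val_insubd ltn_ord. Qed.

Lemma pair_nz (c : F) r : c <> 0 -> ((0, c *: v r) : A * V) <> 0.
Proof. by move=> c0 [] h; apply: c0; apply: (bscale0 vind h). Qed.

Lemma bridge_act1 sigma (ivs : 'I_k -> I) (js : 'I_(n - k) -> J) r c :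
  c <> 0 -> act sigma (fun l => v (ivs l)) (fun l => e (js l)) = c *: v r ->
  step (inl (ivs i0k)) (inl r).
Proof.
move=> c0 E.
pose W := fun m : nat => (if (m < k)%N then inl (ivs (ik m)) else inr (js (jk (m - k)%N))) : K.
exists (fun q : 'I_n.-1 => inl (W (val q).+1)); left; exists (fun q => W (val q).+1); split => //.
exists sigma.
set w := consT _ _.
have wE : forall l, w l = W (val l).
  move=> l; rewrite /w (consT_nat _ (fun m => W m.+1)); case: eqP => [->|h].
    rewrite /W hk1; congr (inl (ivs _)); apply: val_inj; by rewrite val_insubd hk1.
  by rewrite prednK //; lia.
have st : stable_perm k w 1.
  split => [l|l1 l2 lt _]; rewrite ?perm1 //.
  by rewrite wE /W; case: ifP.
exists (0, c *: v r); split.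
  right; left; split; first by apply: nV_stable st; lia.
  exists 1%g, sigma; split => //; split; first by move=> l; rewrite perm1.
  rewrite -E; congr (0, act sigma _ _); apply: functional_extensionality => l.
    have lt : (val l < n)%N by have := (ltn_ord l : (val l < k)%N); lia.
    by rewrite insubT /= perm1 wE /W /= ltn_ord ikE.
  have lt : (k + val l < n)%N by have := (ltn_ord l : (val l < n - k)%N); lia.
  rewrite insubT /= perm1 wE /W /=.
  rewrite (_ : (k + val l < k)%N = false); last by lia.
  by rewrite addKn jkE.
split; first exact: pair_nz.
by exists c; rewrite /Defs.uK scale_pair scaler0.
Qed.

Lemma bridge_act2 sigma (ivs : 'I_k -> I) (js : 'I_(n - k) -> J) r c :
  c <> 0 -> act sigma (fun l => v (ivs l)) (fun l => e (js l)) = c *: v r ->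
  step (inr (js j0)) (inl r).
Proof.
move=> c0 E.
pose tv := fun m : nat => if (m < k)%N then m.+1 else if m == k then 0%N else m.
have tvlt : forall l : 'I_n, (tv (val l) < n)%N.
  move=> l; have := (ltn_ord l : (val l < n)%N); rewrite /tv.
  do ![case: ifP => ?]; lia.
pose tauf := fun l : 'I_n => Ordinal (tvlt l).
have tinj : injective tauf.
  move=> a b /(congr1 val) /= h; apply: ord_inj; move: h; rewrite /tv.
  do ![case: ifP => ?]; lia.
pose tau := perm tinj.
have tauE : forall l, val (tau l) = tv (val l) by move=> l; rewrite permE.
pose W := fun m : nat => (if m == 0%N then inr (js j0) else if (m <= k)%N then inl (ivs (ik m.-1))
                         else inr (js (jk (m - k)%N))) : K.
exists (fun q : 'I_n.-1 => inl (W (val q).+1)); left; exists (fun q => W (val q).+1); split => //.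
exists (tau^-1 * sigma)%g.
set w := consT _ _.
have wE : forall l, w l = W (val l).
  move=> l; rewrite /w (consT_nat _ (fun m => W m.+1)); case: eqP => [->|h] //.
  by rewrite prednK //; lia.
have st : stable_perm k w tau.
  split => [l|l1 l2 lt hb].
    rewrite wE tauE /tv.
    case: (ltngtP (val l) k) => h.
    + by rewrite /W /= h.
    + rewrite /W (_ : (val l == 0%N) = false); last by lia.
      by rewrite (_ : (val l <= k)%N = false); last by lia.
    + by rewrite /W.
  rewrite !tauE /tv; case/orP: hb => hb; do ![case: ifP => ?]; simpl in *; lia.
exists (0, c *: v r); split.
  right; left; split; first by apply: nV_stable st; lia.
  exists tau, sigma; split => //; split; first by move=> l; rewrite permM permK.
  rewrite -E; congr (0, act sigma _ _); apply: functional_extensionality => l.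
    have lt : (val l < n)%N by have := (ltn_ord l : (val l < k)%N); lia.
    rewrite insubT /= wE tauE /= /tv ltn_ord /W /=.
    by rewrite ltn_ord ikE.
  have lt : (k + val l < n)%N by have := (ltn_ord l : (val l < n - k)%N); lia.
  rewrite insubT /= wE tauE /= /tv /W.
  rewrite (_ : (k + val l < k)%N = false); last by lia.
  case: (eqVneq (val l) 0%N) => [l0|l0].
    rewrite l0 addn0 eqxx /=; rewrite (_ : l = j0) //; exact: val_inj.
  rewrite (_ : (k + val l == k) = false); last by lia.
  rewrite (_ : (k + val l == 0%N) = false); last by lia.
  rewrite (_ : (k + val l <= k)%N = false); last by lia.
  by rewrite addKn jkE.
split; first exact: pair_nz.
by exists c; rewrite /Defs.uK scale_pair scaler0.
Qed.

Lemma bridge_prod (js : 'I_n -> J) r c :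
  c <> 0 -> prod (fun l => e (js l)) = c *: e r -> forall l0, step (inr (js l0)) (inr r).
Proof.
move=> c0 E l0.
have n0 : (0 < n)%N by lia.
pose o0 : 'I_n := Ordinal n0.
pose sg := tperm o0 l0.
pose W := fun m : nat => (inr (js (sg (insubd o0 m))) : K).
exists (fun q : 'I_n.-1 => inl (W (val q).+1)); left; exists (fun q => W (val q).+1); split => //.
exists sg.
set w := consT _ _.
have pnE : forall l : 'I_n, insubd o0 (val l) = l.
  by move=> l; apply: val_inj; rewrite val_insubd ltn_ord.
have wE : forall l, w l = W (val l).
  move=> l; rewrite /w (consT_nat _ (fun m => W m.+1)); case: eqP => [h|h].
    rewrite /W (_ : insubd o0 (val l) = o0); first by rewrite tpermL.
    by apply: val_inj; rewrite val_insubd ltn_ord h.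
  by rewrite prednK //; lia.
exists (c *: e r, 0); split.
  left; split; first by apply: nV0 => l; rewrite wE.
  rewrite -E; congr (prod _, 0); apply: functional_extensionality => p.
  by rewrite wE /W pnE permKV.
split; first by move=> [] h; apply: c0; apply: (bscale0 eind h).
by exists c; rewrite /Defs.uK scale_pair scaler0.
Qed.
End Setting.


Section Main.
Variables (F : fieldType) (n k : nat).
Hypotheses (hn : (2 <= n)%N) (hk1 : (1 <= k)%N) (hkn : (k <= n - 1)%N).
Variables (A V : lmodType F) (prod : ('I_n -> A) -> A)
  (act : 'S_n -> ('I_k -> V) -> ('I_(n - k) -> A) -> V)
  (I J : Type) (v : I -> V) (e : J -> A).
Hypotheses (prod_ml : multilinear prod)
  (act_ml1 : forall sigma x, multilinear (fun y => act sigma y x))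
  (act_ml2 : forall sigma y, multilinear (fun x => act sigma y x))
  (e_basis : is_basis_of (fun _ => True) e (fun _ => True))
  (v_basis : is_basis_of (fun _ => True) v (fun _ => True))
  (e_mult : forall js : 'I_n -> J, exists (j : J) (c : F), prod (fun l => e (js l)) = c *: e j)
  (v_mult : forall (sigma : 'S_n) (ivs : 'I_k -> I) (js : 'I_(n - k) -> J),
      exists (r : I) (c : F), act sigma (fun l => v (ivs l)) (fun l => e (js l)) = c *: v r).

Local Notation K := (Kidx I J).
Local Notation VA := (V_al v e).
Local Notation AA := (A_al v e).
Local Notation isCl := (isClass prod act v e).
Local Notation Conn := (connected prod act v e).

Let vind : lin_indep v (fun _ => True) := proj1 v_basis.
Let eind : lin_indep e (fun _ => True) := proj1 e_basis.
Let vspan z : span (fun y => exists x, True /\ y = v x) z := proj1 (proj2 v_basis z) Logic.I.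
Let espan z : span (fun y => exists x, True /\ y = e x) z := proj1 (proj2 e_basis z) Logic.I.

Lemma VA_char al z : VA al z <-> span (fun y => exists i, al (inl i) /\ y = v i) z.
Proof.
split.
  move=> h; have := @span_lin _ _ _ (@snd A V) _ _ (fun _ _ => erefl) (fun _ _ => erefl) h.
  apply: span_sub => y [w [[x [ax ->]] ->]].
  case: x ax => [i|j] ax /=; last exact: span0.
  by apply: span_gen; exists i.
move=> h.
have hadd : forall x y : V, ((0 : A), x + y) = ((0 : A), x) + (0, y).
  move=> x y; change (((0 : A), x + y) = (0 + 0, x + y)); by rewrite addr0.
have hsc : forall (a : F) (x : V), ((0 : A), a *: x) = a *: ((0 : A), x).
  move=> a x; change (((0 : A), a *: x) = (a *: 0, a *: x)); by rewrite scaler0.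
have := @span_lin _ _ _ (fun y => ((0 : A), y)) _ _ hadd hsc h.
rewrite /V_al /U_al; apply: span_sub => y' [w [[i [ai ->]] ->]].
by apply: span_gen; exists (inl i).
Qed.

Lemma AA_char al z : AA al z <-> span (fun y => exists j, al (inr j) /\ y = e j) z.
Proof.
split.
  move=> h; have := @span_lin _ _ _ (@fst A V) _ _ (fun _ _ => erefl) (fun _ _ => erefl) h.
  apply: span_sub => y [w [[x [ax ->]] ->]].
  case: x ax => [i|j] ax /=; first exact: span0.
  by apply: span_gen; exists j.
move=> h.
have hadd : forall x y : A, (x + y, (0 : V)) = (x, (0 : V)) + (y, 0).
  move=> x y; change ((x + y, (0 : V)) = (x + y, 0 + 0)); by rewrite addr0.
have hsc : forall (a : F) (x : A), (a *: x, (0 : V)) = a *: (x, (0 : V)).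
  move=> a x; change ((a *: x, (0 : V)) = (a *: x, a *: 0)); by rewrite scaler0.
have := @span_lin _ _ _ (fun y => (y, (0 : V))) _ _ hadd hsc h.
rewrite /A_al /U_al; apply: span_sub => y' [w [[j [aj ->]] ->]].
by apply: span_gen; exists (inr j).
Qed.

Definition Gv (P : I -> Prop) (l : 'I_k) : V -> Prop :=
  if val l == 0%N then (fun z => exists i, P i /\ z = v i) else (fun z => exists i, True /\ z = v i).
Definition Ge (Q : J -> Prop) (l : 'I_(n - k)) : A -> Prop :=
  if val l == 0%N then (fun z => exists j, Q j /\ z = e j) else (fun z => exists j, True /\ z = e j).

Lemma act_exp (P : I -> Prop) (Q : J -> Prop) (S : V -> Prop) :
  S 0 -> (forall a b, S a -> S b -> S (a + b)) -> (forall c a, S a -> S (c *: a)) ->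
  (forall sigma ivs js, P (ivs (i0k hk1)) -> Q (js (j0 hn hk1 hkn)) ->
      S (act sigma (fun l => v (ivs l)) (fun l => e (js l)))) ->
  forall sigma y x, (forall l, span (Gv P l) (y l)) -> (forall l, span (Ge Q l) (x l)) ->
  S (act sigma y x).
Proof.
move=> S0 Sadd Ssc base sigma y x hy hx.
have key : forall f, (forall l, Gv P l (f l)) -> S (act sigma f x).
  2: exact: (ml_expand (act_ml1 sigma x) S0 Sadd Ssc key hy).
move=> y' hy'.
have key : forall f, (forall l, Ge Q l (f l)) -> S (act sigma y' f).
  2: exact: (ml_expand (act_ml2 sigma y') S0 Sadd Ssc key hx).
move=> x' hx'.
have [ivs hivs] : exists ivs : 'I_k -> I, forall l, y' l = v (ivs l) /\ (val l == 0%N -> P (ivs l)).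
  apply: (@fchoice _ _ (fun l i => y' l = v i /\ (val l == 0%N -> P i))) => l; move: (hy' l); rewrite /Gv; case: ifP => h0 [i [pi E]]; exists i; split => //.
have [js hjs] : exists js : 'I_(n - k) -> J, forall l, x' l = e (js l) /\ (val l == 0%N -> Q (js l)).
  apply: (@fchoice _ _ (fun l i => x' l = e i /\ (val l == 0%N -> Q i))) => l; move: (hx' l); rewrite /Ge; case: ifP => h0 [i [pi E]]; exists i; split => //.
have -> : y' = (fun l => v (ivs l)) by apply: functional_extensionality => l; case: (hivs l).
have -> : x' = (fun l => e (js l)) by apply: functional_extensionality => l; case: (hjs l).
apply: base; [exact: (proj2 (hivs _)) | exact: (proj2 (hjs _))].
Qed.

Let csym := @conn_sym F n k hn hk1 hkn A V prod act I J v e vind eind.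

Lemma cl_fwd al x y : isCl al -> al x -> step prod act v e x y -> al y.
Proof. by move=> cl ax s; apply: cls_conn cl ax (step_conn s). Qed.
Lemma cl_bwd al x y : isCl al -> al y -> step prod act v e x y -> al x.
Proof. by move=> cl ay s; apply: cls_conn cl ay (csym (step_conn s)). Qed.

Lemma scl G c (z : V) : span G z -> span G (c *: z).
Proof. exact: span_scale. Qed.
Lemma sclA G c (z : A) : span G z -> span G (c *: z).
Proof. exact: span_scale. Qed.

Lemma VA_sub al : isCl al -> forall sigma u ys xs, VA al u -> VA al (act sigma (withFirst u ys) xs).
Proof.
move=> cl sigma u ys xs hu; apply/VA_char.
apply: (@act_exp (fun i => al (inl i)) (fun _ => True)).
- exact: span0.
- by move=> a b; apply: span_add.
- by move=> c a; apply: scl.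
- move=> s ivs js pi _; have [r [c E]] := v_mult s ivs js; rewrite E.
  case: (eqVneq c 0) => [cz|/eqP cnz]; first by rewrite cz scale0r; exact: span0.
  apply: scl; apply: span_gen; exists r; split => //.
  exact: cl_fwd cl pi (bridge_act1 hn hk1 hkn prod vind cnz E).
- move=> l; rewrite /Gv /withFirst; case: ifP => _; [exact/VA_char | exact: vspan].
- move=> l; rewrite /Ge; case: ifP => _; exact: espan.
Qed.

Lemma VA_basis al : isCl al -> exists Pi : I -> Prop, is_basis_of (VA al) v Pi /\
   forall (sigma : 'S_n) (ivs : 'I_k -> I) (js : 'I_(n - k) -> J),
     (forall l, Pi (ivs l)) ->
     exists (r : I) (c : F), Pi r /\ act sigma (fun l => v (ivs l)) (fun l => e (js l)) = c *: v r.
Proof.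
move=> cl; exists (fun i => al (inl i)); split.
  split; last by move=> z; exact: VA_char.
  by move=> m f c fi _; apply: vind fi (fun _ => Logic.I).
move=> s ivs js hp; have [r [c E]] := v_mult s ivs js.
case: (eqVneq c 0) => [c0|/eqP c0].
  by exists (ivs (i0k hk1)), 0; split => //; rewrite E c0 !scale0r.
exists r, c; split => //.
exact: cl_fwd cl (hp _) (bridge_act1 hn hk1 hkn prod vind (c := c) _ E).
Qed.

Lemma AA_ideal be : isCl be -> forall (as_ : 'I_n -> A) (l : 'I_n), AA be (as_ l) -> AA be (prod as_).
Proof.
move=> cl as_ l hl; apply/AA_char.
pose G := fun l' : 'I_n => if l' == l then (fun z => exists j, be (inr j) /\ z = e j)
                          else (fun z => exists j, True /\ z = e j).
have key : forall f, (forall l', G l' (f l')) -> span (fun y => exists j, be (inr j) /\ y = e j) (prod f).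
  2: apply: (ml_expand prod_ml (span0 _) (@span_add _ _ _) (@sclA _) key).
  2: move=> l'; rewrite /G; case: eqP => [->|_]; [exact/AA_char | exact: espan].
move=> f hf.
have [js hjs] : exists js : 'I_n -> J, forall l', f l' = e (js l') /\ (l' == l -> be (inr (js l'))).
  apply: (@fchoice _ _ (fun l' j => f l' = e j /\ (l' == l -> be (inr j)))) => l'.
  move: (hf l'); rewrite /G; case: ifP => h0 [j [pj E]]; exists j; split => //.
have -> : f = (fun l' => e (js l')) by apply: functional_extensionality => l'; case: (hjs l').
have [r [c E]] := e_mult js; rewrite E.
case: (eqVneq c 0) => [cz|/eqP cnz]; first by rewrite cz scale0r; exact: span0.
apply: sclA; apply: span_gen; exists r; split => //.
apply: cl_fwd cl (proj2 (hjs l) (eqxx l)) (bridge_prod hn hk1 hkn act v eind cnz E l).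
Qed.

Lemma AA_basis be : isCl be -> exists Q : J -> Prop, is_basis_of (AA be) e Q /\
   forall js : 'I_n -> J, (forall l, Q (js l)) ->
     exists (r : J) (c : F), Q r /\ prod (fun l => e (js l)) = c *: e r.
Proof.
move=> cl; exists (fun j => be (inr j)); split.
  split; last by move=> z; exact: AA_char.
  by move=> m f c fi _; apply: eind fi (fun _ => Logic.I).
move=> js hq; have [r [c E]] := e_mult js.
have n0 : (0 < n)%N by lia.
case: (eqVneq c 0) => [c0|/eqP c0].
  by exists (js (Ordinal n0)), 0; split => //; rewrite E c0 !scale0r.
exists r, c; split => //.
exact: cl_fwd cl (hq (Ordinal n0)) (bridge_prod hn hk1 hkn act v eind c0 E _).
Qed.

Local Notation PP al be := (Pspan act (firstS (VA al)) (firstS (AA be))).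

Lemma i0kE (l : 'I_k) : val l = 0%N -> l = i0k hk1.
Proof. by move=> h; apply: val_inj; rewrite h. Qed.
Lemma j0E (l : 'I_(n - k)) : val l = 0%N -> l = j0 hn hk1 hkn.
Proof. by move=> h; apply: val_inj; rewrite h. Qed.

Lemma base_cl al (cl : isCl al) sigma ivs js :
  al (inl (ivs (i0k hk1))) \/ al (inr (js (j0 hn hk1 hkn))) ->
  PP al al (act sigma (fun l => v (ivs l)) (fun l => e (js l))).
Proof.
move=> H; have [r [c E]] := v_mult sigma ivs js.
case: (eqVneq c 0) => [cz|/eqP cnz]; first by rewrite E cz scale0r; exact: span0.
have h1 : step prod act v e (inl (ivs (i0k hk1))) (inl r) by exact: (bridge_act1 hn hk1 hkn prod vind cnz E).
have h2 : step prod act v e (inr (js (j0 hn hk1 hkn))) (inl r) by exact: (bridge_act2 hn hk1 hkn prod vind cnz E).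
have ar : al (inl r) by case: H => H; [exact: cl_fwd cl H h1 | exact: cl_fwd cl H h2].
have a1 := cl_bwd cl ar h1; have a2 := cl_bwd cl ar h2.
apply: span_gen; exists sigma, (fun l => v (ivs l)), (fun l => e (js l)); split; last split => //.
  move=> l; rewrite /firstS; case: eqP => [/i0kE ->|//].
  by apply/VA_char; apply: span_gen; exists (ivs (i0k hk1)).
move=> l; rewrite /firstS; case: eqP => [/j0E ->|//].
by apply/AA_char; apply: span_gen; exists (js (j0 hn hk1 hkn)).
Qed.

Lemma hy_cl al (y : 'I_k -> V) : (forall l, firstS (VA al) l (y l)) ->
  forall l, span (Gv (fun i => al (inl i)) l) (y l).
Proof.
move=> h l; move: (h l); rewrite /firstS /Gv; case: ifP => _ hl; [exact/VA_char | exact: vspan].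
Qed.
Lemma hy_all (y : 'I_k -> V) : forall l, span (Gv (fun _ => True) l) (y l).
Proof. by move=> l; rewrite /Gv; case: ifP => _; exact: vspan. Qed.
Lemma hx_cl be (x : 'I_(n - k) -> A) : (forall l, firstS (AA be) l (x l)) ->
  forall l, span (Ge (fun j => be (inr j)) l) (x l).
Proof.
move=> h l; move: (h l); rewrite /firstS /Ge; case: ifP => _ hl; [exact/AA_char | exact: espan].
Qed.
Lemma hx_all (x : 'I_(n - k) -> A) : forall l, span (Ge (fun _ => True) l) (x l).
Proof. by move=> l; rewrite /Ge; case: ifP => _; exact: espan. Qed.

Lemma E1 al (cl : isCl al) sigma y x : (forall l, firstS (VA al) l (y l)) ->
  PP al al (act sigma y x).
Proof.
move=> hy; apply: (@act_exp (fun i => al (inl i)) (fun _ => True)).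
- exact: span0.
- by move=> a b; apply: span_add.
- by move=> c a; apply: scl.
- by move=> s ivs js pi _; apply: (base_cl cl); left.
- exact: hy_cl.
- exact: hx_all.
Qed.

Lemma E2 be (cl : isCl be) sigma y x : (forall l, firstS (AA be) l (x l)) ->
  PP be be (act sigma y x).
Proof.
move=> hx; apply: (@act_exp (fun _ => True) (fun j => be (inr j))).
- exact: span0.
- by move=> a b; apply: span_add.
- by move=> c a; apply: scl.
- by move=> s ivs js _ pj; apply: (base_cl cl); right.
- exact: hy_all.
- exact: hx_cl.
Qed.

Lemma E3 al be (cla : isCl al) (clb : isCl be) sigma y x : al <> be ->
  (forall l, firstS (VA al) l (y l)) -> (forall l, firstS (AA be) l (x l)) ->
  act sigma y x = 0.
Proof.
move=> ne hy hx; apply: (@act_exp (fun i => al (inl i)) (fun j => be (inr j)) (fun z => z = 0)).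
- by [].
- by move=> a b -> ->; rewrite addr0.
- by move=> c a ->; rewrite scaler0.
- move=> s ivs js pi pj; have [r [c E]] := v_mult s ivs js.
  case: (eqVneq c 0) => [cz|/eqP cnz]; first by rewrite E cz scale0r.
  have ar := cl_fwd cla pi (bridge_act1 hn hk1 hkn prod vind cnz E).
  have br := cl_fwd clb pj (bridge_act2 hn hk1 hkn prod vind cnz E).
  by exfalso; apply: ne; exact: (cls_eq hn hk1 hkn vind eind cla clb ar br).
- exact: hy_cl.
- exact: hx_cl.
Qed.

Lemma Pzero al be : isCl al -> isCl be -> al <> be -> zero_sp (PP al be).
Proof.
move=> cla clb ne z [m [g [c [Hg ->]]]].
apply: big1 => t _; have [s [y [x [hy [hx ->]]]]] := Hg t.
by rewrite (E3 cla clb s ne hy hx) scaler0.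
Qed.

Lemma Psub1 al z : isCl al -> Pspan act (firstS (VA al)) (@allS A (n - k)) z -> PP al al z.
Proof.
move=> cl; apply: span_sub => w [s [y [x [hy [hx ->]]]]]; exact: (E1 cl).
Qed.
Lemma Psub2 be z : isCl be -> Pspan act (@allS V k) (firstS (AA be)) z -> PP be be z.
Proof.
move=> cl; apply: span_sub => w [s [y [x [hy [hx ->]]]]]; exact: (E2 cl).
Qed.
Lemma Pmono1 al z : PP al al z -> Pspan act (@allS V k) (firstS (AA al)) z.
Proof.
apply: span_sub => w [s [y [x [hy [hx ->]]]]]; apply: span_gen; by exists s, y, x.
Qed.
Lemma Pmono2 al z : PP al al z -> Pspan act (firstS (VA al)) (@allS A (n - k)) z.
Proof.
apply: span_sub => w [s [y [x [hy [hx ->]]]]]; apply: span_gen; by exists s, y, x.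
Qed.

Lemma span_zero_gen (M : lmodType F) (G : M -> Prop) : (forall y, G y -> y = 0) -> zero_sp (span G).
Proof.
move=> h z [m [g [c [Hg ->]]]]; apply: big1 => t _; by rewrite (h _ (Hg t)) scaler0.
Qed.

Lemma nzA al be : nonzero_sp (PP al be) -> nonzero_sp (AA be).
Proof.
move=> [z [hz nz]]; apply: NNPP => hA.
have A0 : forall a, AA be a -> a = 0.
  by move=> a ha; apply: NNPP => na; apply: hA; exists a.
apply: nz; apply: (span_zero_gen _ hz); move=> w [s [y [x [hy [hx ->]]]]].
have x0 : x (j0 hn hk1 hkn) = 0 by apply: A0; exact: (hx (j0 hn hk1 hkn)).
by rewrite -(upd_same x (j0 hn hk1 hkn)) x0 (ml_zero (act_ml2 s y)).
Qed.

Lemma nzV al be : nonzero_sp (PP al be) -> nonzero_sp (VA al).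
Proof.
move=> [z [hz nz]]; apply: NNPP => hV.
have V0 : forall a, VA al a -> a = 0.
  by move=> a ha; apply: NNPP => na; apply: hV; exists a.
apply: nz; apply: (span_zero_gen _ hz); move=> w [s [y [x [hy [hx ->]]]]].
have y0 : y (i0k hk1) = 0 by apply: V0; exact: (hy (i0k hk1)).
by rewrite -(upd_same y (i0k hk1)) y0 (ml_zero (act_ml1 s x)).
Qed.

Lemma main_sec :
  let VA := V_al v e in
  let AA := A_al v e in
  let OV := OmegaV prod act v e in
  let OA := OmegaA prod act v e in
  let OV' := OmegaV' prod act v e in
  let OA' := OmegaA' prod act v e in
  let P := fun al be => Pspan act (firstS (VA al)) (firstS (AA be)) in
  direct_sum (fun _ => True) VA OV /\
  (forall al, OV al ->
     (forall (sigma : 'S_n) (u : V) (ys : 'I_k -> V) (xs : 'I_(n - k) -> A),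
        VA al u -> VA al (act sigma (withFirst u ys) xs)) /\
     (exists Pi : I -> Prop, is_basis_of (VA al) v Pi /\
        forall (sigma : 'S_n) (ivs : 'I_k -> I) (js : 'I_(n - k) -> J),
          (forall l, Pi (ivs l)) ->
          exists (r : I) (c : F), Pi r /\
            act sigma (fun l => v (ivs l)) (fun l => e (js l)) = c *: v r)) /\
  direct_sum (fun _ => True) AA OA /\
  (forall be, OA be ->
     (forall (as_ : 'I_n -> A) (l : 'I_n), AA be (as_ l) -> AA be (prod as_)) /\
     (exists Q : J -> Prop, is_basis_of (AA be) e Q /\
        forall js : 'I_n -> J, (forall l, Q (js l)) ->
          exists (r : J) (c : F), Q r /\ prod (fun l => e (js l)) = c *: e r)) /\
  (exists f : (Kidx I J -> Prop) -> (Kidx I J -> Prop),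
     (forall al, OV' al -> OA' (f al)) /\
     (forall al1 al2, OV' al1 -> OV' al2 -> f al1 = f al2 -> al1 = al2) /\
     (forall be, OA' be -> exists al, OV' al /\ f al = be) /\
     (forall al, OV' al ->
        nonzero_sp (P al (f al)) /\
        (forall be, OA be -> be <> f al -> zero_sp (P al be)))).
Proof.
move=> VA0 AA0 OV OA OV' OA' P0; rewrite {}/P0 {}/OV' {}/OA' {}/OV {}/OA {}/VA0 {}/AA0.
split.
  have EV : V_al v e = Famb v (@inl I J).
    apply: functional_extensionality => al; apply: functional_extensionality => z.
    apply: propositional_extensionality; exact: (VA_char al z).
  rewrite EV; refine (@ds_gen F V I v K (@inl I J) (OmegaV prod act v e) vind vspan _ _).
    move=> i; exists (Conn (inl i)); have [c1 c2] := cls_of prod act v e (inl i).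
    split => //; split => //; exists (v i); split.
      by apply/VA_char; apply: span_gen; exists i.
    exact: (@bnz _ _ _ v vind i).
  move=> al1 al2 x [c1 _] [c2 _] a1 a2; exact: (cls_eq hn hk1 hkn vind eind c1 c2 a1 a2).
split.
  move=> al [cl _]; split; [exact: VA_sub cl | exact: VA_basis cl].
split.
  have EA : A_al v e = Famb e (@inr I J).
    apply: functional_extensionality => al; apply: functional_extensionality => z.
    apply: propositional_extensionality; exact: (AA_char al z).
  rewrite EA; refine (@ds_gen F A J e K (@inr I J) (OmegaA prod act v e) eind espan _ _).
    move=> j; exists (Conn (inr j)); have [c1 c2] := cls_of prod act v e (inr j).
    split => //; split => //; exists (e j); split.
      by apply/AA_char; apply: span_gen; exists j.
    exact: (@bnz _ _ _ e eind j).
  move=> al1 al2 x [c1 _] [c2 _] a1 a2; exact: (cls_eq hn hk1 hkn vind eind c1 c2 a1 a2).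
split.
  move=> be [cl _]; split; [exact: AA_ideal cl | exact: AA_basis cl].
exists (fun al => al).
have key : forall al, isClass prod act v e al ->
    nonzero_sp (Pspan act (firstS (V_al v e al)) (@allS A (n - k))) -> nonzero_sp (PP al al).
  move=> al cl [z [hz nz]]; exists z; split => //; exact: Psub1 cl hz.
split.
  move=> al [[cl _] hP]; have hPP := key al cl hP.
  split; first by split => //; exact: nzA hPP.
  have [z [hz nz]] := hPP; exists z; split => //; exact: Pmono1 hz.
split; first by [].
split.
  move=> be [[cl _] [z [hz nz]]]; exists be; split => //.
  have hPP : nonzero_sp (PP be be) by exists z; split => //; exact: Psub2 cl hz.
  split; first by split => //; exact: nzV hPP.
  have [z' [hz' nz']] := hPP; exists z'; split => //; exact: Pmono2 hz'.
move=> al [[cl _] hP]; split; first exact: key al cl hP.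
move=> be [clb _] ne; apply: Pzero => //; by move=> e'; apply: ne.
Qed.
End Main.

Unset Implicit Arguments.

Theorem mainTheorem12 (F : fieldType) (n k : nat)
  (hn : (2 <= n)%N) (hk1 : (1 <= k)%N) (hkn : (k <= n - 1)%N)
  (A V : lmodType F)
  (prod : ('I_n -> A) -> A)
  (act : 'S_n -> ('I_k -> V) -> ('I_(n - k) -> A) -> V)
  (I J : Type) (v : I -> V) (e : J -> A)
  (prod_ml : multilinear prod)
  (act_ml1 : forall sigma x, multilinear (fun y => act sigma y x))
  (act_ml2 : forall sigma y, multilinear (fun x => act sigma y x))
  (e_basis : is_basis_of (fun _ => True) e (fun _ => True))
  (v_basis : is_basis_of (fun _ => True) v (fun _ => True))
  (e_mult : forall js : 'I_n -> J, exists (j : J) (c : F), prod (fun l => e (js l)) = c *: e j)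
  (v_mult : forall (sigma : 'S_n) (ivs : 'I_k -> I) (js : 'I_(n - k) -> J),
      exists (r : I) (c : F), act sigma (fun l => v (ivs l)) (fun l => e (js l)) = c *: v r) :
  let VA := V_al v e in
  let AA := A_al v e in
  let OV := OmegaV prod act v e in
  let OA := OmegaA prod act v e in
  let OV' := OmegaV' prod act v e in
  let OA' := OmegaA' prod act v e in
  let P := fun al be => Pspan act (firstS (VA al)) (firstS (AA be)) in
  direct_sum (fun _ => True) VA OV /\
  (forall al, OV al ->
     (forall (sigma : 'S_n) (u : V) (ys : 'I_k -> V) (xs : 'I_(n - k) -> A),
        VA al u -> VA al (act sigma (withFirst u ys) xs)) /\
     (exists Pi : I -> Prop, is_basis_of (VA al) v Pi /\
        forall (sigma : 'S_n) (ivs : 'I_k -> I) (js : 'I_(n - k) -> J),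
          (forall l, Pi (ivs l)) ->
          exists (r : I) (c : F), Pi r /\
            act sigma (fun l => v (ivs l)) (fun l => e (js l)) = c *: v r)) /\
  direct_sum (fun _ => True) AA OA /\
  (forall be, OA be ->
     (forall (as_ : 'I_n -> A) (l : 'I_n), AA be (as_ l) -> AA be (prod as_)) /\
     (exists Q : J -> Prop, is_basis_of (AA be) e Q /\
        forall js : 'I_n -> J, (forall l, Q (js l)) ->
          exists (r : J) (c : F), Q r /\ prod (fun l => e (js l)) = c *: e r)) /\
  (exists f : (Kidx I J -> Prop) -> (Kidx I J -> Prop),
     (forall al, OV' al -> OA' (f al)) /\
     (forall al1 al2, OV' al1 -> OV' al2 -> f al1 = f al2 -> al1 = al2) /\
     (forall be, OA' be -> exists al, OV' al /\ f al = be) /\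
     (forall al, OV' al ->
        nonzero_sp (P al (f al)) /\
        (forall be, OA be -> be <> f al -> zero_sp (P al be)))).
Proof.
exact: (main_sec hn hk1 hkn prod_ml act_ml1 act_ml2 e_basis v_basis e_mult v_mult).
Qed.
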